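(* Let $a>b>0$, $c>0$, and for a real number $\mu\notin\{a^2,b^2,-c^2\}$ let $C_\mu=\{(x,y,z):\frac{x^2}{a^2-\mu}+\frac{y^2}{b^2-\mu}-\frac{z^2}{c^2+\mu}=0\}$ and $S_\mu=C_\mu\cap\mathbb{S}^2$; write $C=C_0$, $S=S_0$. Fix $\lambda$ with $-c^2<\lambda<b^2$ and let $F_\lambda$ be the linear map of $\mathbb{R}^3$ with diagonal matrix \[F_\lambda=\operatorname{diag}\Big(\tfrac{\sqrt{a^2-\lambda}}{a},\ \tfrac{\sqrt{b^2-\lambda}}{b},\ \tfrac{\sqrt{c^2+\lambda}}{c}\Big).\] Then $F_\lambda$ maps $S$ into $S_\lambda$. Moreover, if a point $v\in S$ belongs to $S_\mu$ for some $\mu\notin\{0,a^2,b^2,-c^2\}$, then $F_\lambda(v)$ also belongs to $S_\mu$.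
   Context: $\mathbb{S}^2$ is the unit sphere in $\mathbb{R}^3$. The conics $S_\mu$ form the confocal family of the spherical conic $S$. *)

(* Defs.v *)
From Stdlib Require Import Reals.
Open Scope R_scope.

Definition pt := (R * R * R)%type.

Definition in_cone (a b c mu : R) (p : pt) : Prop :=
  let '(x, y, z) := p in
  x ^ 2 / (a ^ 2 - mu) + y ^ 2 / (b ^ 2 - mu) - z ^ 2 / (c ^ 2 + mu) = 0.

Definition in_sphere (p : pt) : Prop :=
  let '(x, y, z) := p in x ^ 2 + y ^ 2 + z ^ 2 = 1.

Definition in_S (a b c mu : R) (p : pt) : Prop :=
  in_cone a b c mu p /\ in_sphere p.

Definition F (a b c lam : R) (p : pt) : pt :=
  let '(x, y, z) := p in
  (sqrt (a ^ 2 - lam) / a * x,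
   sqrt (b ^ 2 - lam) / b * y,
   sqrt (c ^ 2 + lam) / c * z).

(* Main.v *)
Require Import Defs.
From Stdlib Require Import Reals Lra.
Open Scope R_scope.

Lemma sq_lem (s a x t : R) : a <> 0 -> s * s = t -> (s / a * x) ^ 2 = t / a ^ 2 * x ^ 2.
Proof. intros Ha Hs. replace ((s / a * x) ^ 2) with ((s*s) / a^2 * x^2) by (field; repeat split; auto).
rewrite Hs; reflexivity. Qed.

Theorem mainTheorem14 (a b c lam : R) :
  0 < b -> b < a -> 0 < c ->
  - c ^ 2 < lam -> lam < b ^ 2 ->
  (forall v : pt, in_S a b c 0 v -> in_S a b c lam (F a b c lam v)) /\
  (forall (v : pt) (mu : R),
     mu <> 0 -> mu <> a ^ 2 -> mu <> b ^ 2 -> mu <> - c ^ 2 ->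
     in_S a b c 0 v -> in_S a b c mu v -> in_S a b c mu (F a b c lam v)).
Proof.
  intros hb hba hc hl1 hl2.
  assert (hab : b^2 < a^2) by nra.
  assert (Ha : a <> 0) by lra. assert (Hb : b <> 0) by lra. assert (Hc : c <> 0) by lra.
  assert (a2 : a^2 <> 0) by nra. assert (b2 : b^2 <> 0) by nra. assert (c2 : c^2 <> 0) by nra.
  assert (e1 : sqrt (a^2 - lam) * sqrt (a^2 - lam) = a^2 - lam) by (apply sqrt_sqrt; lra).
  assert (e2 : sqrt (b^2 - lam) * sqrt (b^2 - lam) = b^2 - lam) by (apply sqrt_sqrt; lra).
  assert (e3 : sqrt (c^2 + lam) * sqrt (c^2 + lam) = c^2 + lam) by (apply sqrt_sqrt; lra).
  assert (n1 : a^2 - lam <> 0) by lra.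
  assert (n2 : b^2 - lam <> 0) by lra.
  assert (n3 : c^2 + lam <> 0) by lra.
  split.
  - intros [[x y] z] [H0 Hs]. unfold F, in_S, in_cone, in_sphere in *.
    rewrite (sq_lem _ _ x _ Ha e1), (sq_lem _ _ y _ Hb e2), (sq_lem _ _ z _ Hc e3).
    rewrite !Rminus_0_r, Rplus_0_r in H0.
    split.
    + rewrite <- H0. field; repeat split; auto.
    + rewrite <- Hs.
      replace ((a ^ 2 - lam) / a ^ 2 * x ^ 2 + (b ^ 2 - lam) / b ^ 2 * y ^ 2 + (c ^ 2 + lam) / c ^ 2 * z ^ 2)
        with (x^2+y^2+z^2 - lam * (x ^ 2 / a ^ 2 + y ^ 2 / b ^ 2 - z ^ 2 / c ^ 2)) by (field; repeat split; auto).
      rewrite H0. ring.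
  - intros [[x y] z] mu m0 ma mb mc [H0 Hs] [Hm _]. unfold F, in_S, in_cone, in_sphere in *.
    rewrite (sq_lem _ _ x _ Ha e1), (sq_lem _ _ y _ Hb e2), (sq_lem _ _ z _ Hc e3).
    rewrite !Rminus_0_r, Rplus_0_r in H0.
    assert (m1 : a^2 - mu <> 0) by lra.
    assert (m2 : b^2 - mu <> 0) by lra.
    assert (m3 : c^2 + mu <> 0) by lra.
    split.
    + replace ((a ^ 2 - lam) / a ^ 2 * x ^ 2 / (a ^ 2 - mu) + (b ^ 2 - lam) / b ^ 2 * y ^ 2 / (b ^ 2 - mu) -
   (c ^ 2 + lam) / c ^ 2 * z ^ 2 / (c ^ 2 + mu))
        with (lam / mu * (x ^ 2 / a ^ 2 + y ^ 2 / b ^ 2 - z ^ 2 / c ^ 2)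
              + (mu - lam) / mu * (x ^ 2 / (a ^ 2 - mu) + y ^ 2 / (b ^ 2 - mu) - z ^ 2 / (c ^ 2 + mu)))
        by (field; repeat split; auto).
      rewrite H0, Hm. ring.
    + rewrite <- Hs.
      replace ((a ^ 2 - lam) / a ^ 2 * x ^ 2 + (b ^ 2 - lam) / b ^ 2 * y ^ 2 + (c ^ 2 + lam) / c ^ 2 * z ^ 2)
        with (x^2+y^2+z^2 - lam * (x ^ 2 / a ^ 2 + y ^ 2 / b ^ 2 - z ^ 2 / c ^ 2)) by (field; repeat split; auto).
      rewrite H0. ring.
Qed.
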